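(* Suppose Assumption 3 holds and $\alpha>0$ (which holds for almost all data). Let $\ell$ be the exponential loss $\ell(x)=e^{-x}$ or the logistic loss $\ell(x)=\ln(1+e^{-x})$, and let $K=\frac{1+\ln n}{\alpha}$ in the exponential case and $K=\frac{2n}{e\alpha}$ in the logistic case. Then for every $w\in\mathbb{R}^d$ with $\langle w,\bar u\rangle\ge0$ and $\|\Pi_\perp w\|> K$, we have $\langle\Pi_\perp w,\nabla\mathcal{R}(w)\rangle\ge0$.
   Context: Data $(x_i,y_i)_{i=1}^n$ with $x_i\in\mathbb{R}^d$, $\|x_i\|\le 1$, $y_i\in\{-1,+1\}$, $z_i:=y_ix_i$, linearly separable. $\gamma:=\max_{\|u\|=1}\min_i\langle u,z_i\rangle>0$ and $\bar u$ is the unique unit vector attaining it. $S$ is the set of indices $i$ with $\langle\bar u,z_i\rangle=\gamma$ (support vectors). Assumption 3: $\{z_i:i\in S\}$ spans $\mathbb{R}^d$. $\alpha:=\min_{\|\xi\|=1,\ \xi\perp\bar u}\max_{i\in S}\langle\xi,z_i\rangle$. For $w\in\mathbb{R}^d$, $\mathcal{R}(w):=\frac1n\sum_{i=1}^n\ell(\langle w,z_i\rangle)$, so $\nabla\mathcal{R}(w)=\frac1n\sum_i\ell'(\langle w,z_i\rangle)z_i$. $\Pi_\perp$ is the orthogonal projection onto the orthogonal complement of $\mathrm{span}(\bar u)$. *)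

(* Defs.v *)
(* classical reals. Vectors in R^d are functions nat -> R of
   which only the coordinates 0..d-1 matter. Data points are indexed 0..n-1. *)
From Stdlib Require Import Reals Lra.
Open Scope R_scope.

Definition vec := nat -> R.

Fixpoint sumR (m : nat) (f : nat -> R) : R :=
  match m with
  | O => 0
  | S m' => sumR m' f + f m'
  end.

Definition dot (d : nat) (u v : vec) : R := sumR d (fun k => u k * v k).
Definition norm (d : nat) (u : vec) : R := sqrt (dot d u u).

Definition zvec (x : nat -> vec) (y : nat -> R) : nat -> vec :=
  fun i k => y i * x i k.

(* ubar is a unit vector attaining gamma = max_{|u|=1} min_i <u, z_i> *)
Definition max_margin (d n : nat) (z : nat -> vec) (ubar : vec) (gamma : R) : Prop :=
  norm d ubar = 1 /\
  (forall i, (i < n)%nat -> gamma <= dot d ubar (z i)) /\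
  (exists i, (i < n)%nat /\ dot d ubar (z i) = gamma) /\
  (forall u : vec, norm d u = 1 -> exists i, (i < n)%nat /\ dot d u (z i) <= gamma).

Definition in_S (d : nat) (z : nat -> vec) (ubar : vec) (gamma : R) (i : nat) : Prop :=
  dot d ubar (z i) = gamma.

Definition assumption3 (d n : nat) (z : nat -> vec) (ubar : vec) (gamma : R) : Prop :=
  forall v : vec, exists c : nat -> R,
    (forall i, (i < n)%nat -> ~ in_S d z ubar gamma i -> c i = 0) /\
    (forall k, (k < d)%nat -> v k = sumR n (fun i => c i * z i k)).

(* alpha = min_{|xi|=1, xi ⊥ ubar} max_{i in S} <xi, z_i>  (the minimum is
   characterized as a lower bound that is attained) *)
Definition is_alpha (d n : nat) (z : nat -> vec) (ubar : vec) (gamma alpha : R) : Prop :=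
  (forall xi : vec, norm d xi = 1 -> dot d xi ubar = 0 ->
     exists i, (i < n)%nat /\ in_S d z ubar gamma i /\ alpha <= dot d xi (z i)) /\
  (exists xi : vec, norm d xi = 1 /\ dot d xi ubar = 0 /\
     forall i, (i < n)%nat -> in_S d z ubar gamma i -> dot d xi (z i) <= alpha).

Inductive loss_kind := ExpLoss | LogisticLoss.

Definition loss (L : loss_kind) (t : R) : R :=
  match L with
  | ExpLoss => exp (- t)
  | LogisticLoss => ln (1 + exp (- t))
  end.

Definition dloss (L : loss_kind) (t : R) : R :=
  match L with
  | ExpLoss => - exp (- t)
  | LogisticLoss => - (exp (- t) / (1 + exp (- t)))
  end.

Lemma dloss_correct (L : loss_kind) (t : R) :
  derivable_pt_lim (loss L) t (dloss L t).
Proof.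
  assert (He : derivable_pt_lim (fun s => exp (- s)) t (- exp (- t))).
  { replace (- exp (- t)) with (exp (- t) * (-1)) by ring.
    apply (derivable_pt_lim_comp (fun s => - s) exp).
    - replace (-1) with (- 1) by ring. apply derivable_pt_lim_opp, derivable_pt_lim_id.
    - apply derivable_pt_lim_exp. }
  destruct L; simpl.
  - exact He.
  - assert (Hp : 0 < 1 + exp (- t)) by (pose proof (exp_pos (- t)); lra).
    replace (- (exp (- t) / (1 + exp (- t)))) with ((/ (1 + exp (- t))) * (0 + - exp (- t)))
      by (field; lra).
    apply (derivable_pt_lim_comp (fun s => 1 + exp (- s)) ln).
    + apply derivable_pt_lim_plus; [apply derivable_pt_lim_const | exact He].
    + apply derivable_pt_lim_ln; exact Hp.
Qed.

Definition risk (d n : nat) (L : loss_kind) (z : nat -> vec) (w : vec) : R :=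
  / INR n * sumR n (fun i => loss L (dot d w (z i))).

Definition grad (d n : nat) (L : loss_kind) (z : nat -> vec) (w : vec) : vec :=
  fun k => / INR n * sumR n (fun i => dloss L (dot d w (z i)) * z i k).

Definition proj_perp (d : nat) (ubar w : vec) : vec :=
  fun k => w k - dot d w ubar * ubar k.

Definition Kthr (L : loss_kind) (n : nat) (alpha : R) : R :=
  match L with
  | ExpLoss => (1 + ln (INR n)) / alpha
  | LogisticLoss => 2 * INR n / (exp 1 * alpha)
  end.

(* Main.v *)
Require Import Defs.
From Stdlib Require Import Reals Lra Lia.
Open Scope R_scope.

Lemma sumR_ext m f g : (forall k, (k < m)%nat -> f k = g k) -> sumR m f = sumR m g.
Proof. induction m; simpl; intros H; [reflexivity|]. rewrite IHm by (intros; apply H; lia). rewrite H by lia. reflexivity. Qed.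

Lemma sumR_plus m f g : sumR m (fun k => f k + g k) = sumR m f + sumR m g.
Proof. induction m; simpl; [ring|]. rewrite IHm; ring. Qed.

Lemma sumR_scal m c f : sumR m (fun k => c * f k) = c * sumR m f.
Proof. induction m; simpl; [ring|]. rewrite IHm; ring. Qed.

Lemma sumR_zero m : sumR m (fun _ => 0) = 0.
Proof. induction m; simpl; [ring|]. rewrite IHm; ring. Qed.

Lemma sumR_swap m p (f : nat -> nat -> R) :
  sumR m (fun k => sumR p (fun i => f k i)) = sumR p (fun i => sumR m (fun k => f k i)).
Proof.
  induction m; simpl.
  - symmetry; apply sumR_zero.
  - rewrite IHm, <- sumR_plus. reflexivity.
Qed.

Lemma sumR_nonneg m f : (forall k, (k < m)%nat -> 0 <= f k) -> 0 <= sumR m f.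
Proof. induction m; simpl; intros H; [lra|]. assert (0 <= f m) by (apply H; lia).
  assert (0 <= sumR m f) by (apply IHm; intros; apply H; lia). lra. Qed.

Lemma sumR_bound m h B i0 : 0 <= B -> (i0 < m)%nat -> (forall k, (k < m)%nat -> h k <= B) ->
  sumR m h <= INR m * B + h i0.
Proof.
  induction m; intros HB Hi H; [lia|]. simpl sumR. rewrite S_INR.
  destruct (Nat.eq_dec i0 m) as [->|Hne].
  - assert (sumR m h <= INR m * B).
    { clear IHm. assert (forall k, (k < m)%nat -> h k <= B) by (intros; apply H; lia).
      clear H Hi. induction m; [simpl; lra|]. rewrite S_INR; simpl sumR.
      assert (h m <= B) by (apply H0; lia).
      assert (sumR m h <= INR m * B) by (apply IHm; intros; apply H0; lia). lra. }
    lra.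
  - assert (sumR m h <= INR m * B + h i0) by (apply IHm; auto; try lia; intros; apply H; lia).
    assert (h m <= B) by (apply H; lia). lra.
Qed.

Lemma dot_comm d u v : dot d u v = dot d v u.
Proof. unfold dot. apply sumR_ext; intros; ring. Qed.

Lemma dot_self_nonneg d u : 0 <= dot d u u.
Proof. unfold dot. apply sumR_nonneg; intros; nra. Qed.

Lemma dot_proj d ub w u : dot d (proj_perp d ub w) u = dot d w u - dot d w ub * dot d ub u.
Proof. unfold dot at 1, proj_perp. rewrite (sumR_ext d _ (fun k => w k * u k + (- dot d w ub) * (ub k * u k))) by (intros; ring).
  rewrite sumR_plus, sumR_scal. unfold dot. ring. Qed.

Lemma dot_scal_l d c u v : dot d (fun k => c * u k) v = c * dot d u v.
Proof. unfold dot. rewrite <- sumR_scal. apply sumR_ext; intros; ring. Qed.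

Lemma dot_grad d n L z v w :
  dot d v (grad d n L z w) = / INR n * sumR n (fun i => dloss L (dot d w (z i)) * dot d v (z i)).
Proof.
  unfold dot at 1, grad.
  rewrite (sumR_ext d _ (fun k => / INR n * sumR n (fun i => dloss L (dot d w (z i)) * (v k * z i k)))).
  2:{ intros. rewrite Rmult_comm, Rmult_assoc. f_equal. rewrite Rmult_comm, <- sumR_scal.
      apply sumR_ext; intros; ring. }
  rewrite sumR_scal, sumR_swap. f_equal. apply sumR_ext; intros. rewrite sumR_scal. reflexivity.
Qed.

Definition G L s := - dloss L s.

Lemma G_pos L s : 0 < G L s /\ G L s <= exp (- s).
Proof.
  pose proof (exp_pos (-s)). unfold G, dloss; destruct L.
  - lra.
  - split.
    + apply Ropp_lt_cancel. rewrite Ropp_involutive, Ropp_0. apply Ropp_lt_gt_0_contravar.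
      apply Rdiv_lt_0_compat; lra.
    + rewrite Ropp_involutive. unfold Rdiv.
      assert (/ (1 + exp (-s)) <= 1) by (rewrite <- Rinv_1; apply Rinv_le_contravar; lra).
      nra.
Qed.

Lemma exp_le a b : a <= b -> exp a <= exp b.
Proof. intros [H|H]; [left; apply exp_increasing; auto| subst; lra]. Qed.

Lemma pexp_bound p : p * exp (- p) <= / exp 1.
Proof.
  pose proof (exp_ineq1_le (p - 1)).
  replace (exp (-p)) with (/ exp 1 * / exp (p - 1)).
  2:{ rewrite <- Rinv_mult, <- exp_plus, <- exp_Ropp. f_equal. f_equal. ring. }
  pose proof (exp_pos (p-1)). pose proof (exp_pos 1).
  assert (p * / exp (p-1) <= 1).
  { apply (Rmult_le_reg_r (exp (p-1))); auto. rewrite Rmult_assoc, Rinv_l by lra. lra. }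
  assert (0 < / exp 1) by (apply Rinv_0_lt_compat; lra). nra.
Qed.

Lemma term_bound L s p c : 0 <= c -> c + p <= s -> G L s * p <= exp (- c) / exp 1.
Proof.
  intros Hc Hs. destruct (G_pos L s) as [G0 G1].
  pose proof (exp_pos (-c)). pose proof (exp_pos 1).
  assert (0 < exp (-c) / exp 1) by (apply Rdiv_lt_0_compat; lra).
  destruct (Rle_dec p 0). { nra. }
  assert (exp (- s) <= exp (-c) * exp (-p)) by (rewrite <- exp_plus; apply exp_le; lra).
  pose proof (pexp_bound p). pose proof (exp_pos (-p)).
  unfold Rdiv. apply Rle_trans with (exp (-c) * (p * exp (-p))); [nra|].
  apply Rmult_le_compat_l; lra.
Qed.

Lemma ln_nonneg x : 1 <= x -> 0 <= ln x.
Proof. intros H. destruct (Rle_dec 0 (ln x)); auto.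
  assert (exp (ln x) < exp 0) by (apply exp_increasing; lra).
  rewrite exp_ln, exp_0 in H0 by lra. lra. Qed.

Lemma final_exp n c m s p : (1 <= n)%nat -> 0 <= c -> 0 < m -> s = c + p -> p <= - m ->
  1 + ln (INR n) < m -> INR n * (exp (- c) / exp 1) + G ExpLoss s * p <= 0.
Proof.
  intros Hn Hc Hm Hs Hp HK. unfold G, dloss. rewrite Ropp_involutive.
  assert (1 <= INR n) by (apply (le_INR 1); auto).
  pose proof (ln_nonneg _ H).
  assert (Hy : exp 1 * INR n < exp m).
  { replace (exp 1 * INR n) with (exp 1 * exp (ln (INR n))) by (rewrite exp_ln; lra). rewrite <- exp_plus. apply exp_increasing; lra. }
  pose proof (exp_ineq1_le 1). pose proof (exp_pos (-c)). pose proof (exp_pos m).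
  assert (exp (-s) = exp (-c) * exp (-p)) by (rewrite <- exp_plus; f_equal; lra).
  assert (exp m <= exp (-p)) by (apply exp_le; lra).
  set (X := exp (-c)) in *. set (E := exp 1) in *. set (Y := exp m) in *.
  assert (exp (-s) * p <= - m * (X * Y)).
  { rewrite H4. assert (0 < X * exp (-p)) by (apply Rmult_lt_0_compat; auto; apply exp_pos).
    assert (X * Y <= X * exp (-p)) by (apply Rmult_le_compat_l; lra). nra. }
  assert (INR n * (X / E) <= m * (X * Y)).
  { unfold Rdiv. assert (/ E <= 1) by (rewrite <- Rinv_1; apply Rinv_le_contravar; lra).
    assert (INR n <= m * Y) by nra.
    assert (INR n * (X * / E) <= INR n * X) by (assert (0 <= INR n * X) by nra; nra). nra. }
  lra.
Qed.

Lemma final_log n c m s p : (1 <= n)%nat -> 0 <= c -> 0 < m -> s = c + p -> p <= - m ->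
  2 * INR n / exp 1 < m -> INR n * (exp (- c) / exp 1) + G LogisticLoss s * p <= 0.
Proof.
  intros Hn Hc Hm Hs Hp HK. unfold G, dloss. rewrite Ropp_involutive.
  assert (1 <= INR n) by (apply (le_INR 1); auto).
  pose proof (exp_ineq1_le 1). pose proof (exp_pos (-c)). pose proof (exp_pos m).
  pose proof (exp_ineq1_le m).
  assert (exp (-c) <= 1) by (rewrite <- exp_0; apply exp_le; lra).
  assert (exp (-s) = exp (-c) * exp (-p)) by (rewrite <- exp_plus; f_equal; lra).
  assert (exp m <= exp (-p)) by (apply exp_le; lra).
  set (X := exp (-c)) in *. set (E := exp 1) in *. set (Y := exp m) in *.
  set (q := exp (-s)) in *.
  assert (Hq : X * Y <= q) by (rewrite H5; apply Rmult_le_compat_l; lra).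
  assert (0 < q) by (unfold q; apply exp_pos).
  assert (HmE : 2 * INR n < m * E).
  { apply (Rmult_lt_compat_r E) in HK; [|lra]. unfold Rdiv in HK.
    rewrite Rmult_assoc, Rinv_l in HK by lra. lra. }
  assert (Hkey : INR n * X * (1 + q) <= m * q * E).
  { assert (X * Y * (m * E - INR n) <= q * (m*E - INR n)) by (apply Rmult_le_compat_r; lra).
    assert (X * (m*E - INR n) <= X * Y * (m*E - INR n)).
    { rewrite Rmult_assoc. apply Rmult_le_compat_l; [lra|]. nra. }
    assert (0 <= X * (m*E - 2 * INR n)) by (apply Rmult_le_pos; lra).
    assert (INR n * X <= X * (m*E - INR n)) by (replace (X * (m*E - INR n)) with (X * (m*E - 2 * INR n) + INR n * X) by ring; lra).
    replace (m * q * E) with (q * (m * E - INR n) + INR n * q) by ring.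
    replace (INR n * X * (1 + q)) with (INR n * X + INR n * X * q) by ring.
    assert (INR n * X * q <= INR n * q) by (apply Rmult_le_compat_r; [lra|]; rewrite <- (Rmult_1_r (INR n)) at 2; apply Rmult_le_compat_l; lra).
    lra. }
  set (g := q / (1 + q)).
  assert (Hg : g * (1 + q) = q) by (unfold g; field; lra).
  assert (0 < g) by (unfold g; apply Rdiv_lt_0_compat; lra).
  assert (INR n * (X / E) <= m * g).
  { apply (Rmult_le_reg_r (E * (1+q))). nra.
    replace (INR n * (X / E) * (E * (1 + q))) with (INR n * X * (1+q)) by (field; lra).
    replace (m * g * (E * (1 + q))) with (m * q * E) by (unfold g; field; lra). lra. }
  nra.
Qed.

Theorem mainTheorem7 :
  forall (d n : nat) (x : nat -> vec) (y : nat -> R) (ubar : vec) (gamma alpha : R)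
         (L : loss_kind) (w : vec),
    (forall i, (i < n)%nat -> norm d (x i) <= 1) ->
    (forall i, (i < n)%nat -> y i = 1 \/ y i = -1) ->
    0 < gamma ->
    max_margin d n (zvec x y) ubar gamma ->
    assumption3 d n (zvec x y) ubar gamma ->
    is_alpha d n (zvec x y) ubar gamma alpha ->
    0 < alpha ->
    0 <= dot d w ubar ->
    Kthr L n alpha < norm d (proj_perp d ubar w) ->
    0 <= dot d (proj_perp d ubar w) (grad d n L (zvec x y) w).
Proof.
  intros d n x y ub gamma alpha L w _ _ Hg [Hu [Hmin _]] _ [Hal _] Ha Hwa HK.
  set (z := zvec x y) in *. set (v := proj_perp d ub w) in *. set (a := dot d w ub) in *.
  set (r := norm d v) in *.
  rewrite dot_grad.
  destruct n as [|n'].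
  { simpl. lra. }
  set (n := S n') in *.
  assert (Hn : (1 <= n)%nat) by (unfold n; lia).
  assert (HnR : 1 <= INR n) by (apply (le_INR 1); auto).
  assert (Huu : dot d ub ub = 1).
  { unfold norm in Hu. pose proof (dot_self_nonneg d ub). rewrite <- (sqrt_sqrt _ H), Hu. ring. }
  assert (Hvu : dot d v ub = 0).
  { unfold v. rewrite dot_proj, Huu. fold a. ring. }
  assert (HK0 : 0 <= Kthr L n alpha).
  { destruct L; unfold Kthr.
    - pose proof (ln_nonneg _ HnR). apply Rmult_le_pos; [lra|]. left; apply Rinv_0_lt_compat; auto.
    - pose proof (exp_pos 1). unfold Rdiv. apply Rmult_le_pos; [lra|]. left; apply Rinv_0_lt_compat.
      apply Rmult_lt_0_compat; auto. }
  assert (Hr : 0 < r) by lra.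
  assert (Hvv : dot d v v = r * r).
  { unfold r, norm. rewrite sqrt_sqrt; auto. apply dot_self_nonneg. }
  set (xi := fun k => (- / r) * v k).
  assert (Hxi1 : norm d xi = 1).
  { unfold norm, xi. rewrite dot_scal_l, dot_comm, dot_scal_l, Hvv.
    replace (- / r * (- / r * (r * r))) with 1 by (field; lra). apply sqrt_1. }
  assert (Hxi2 : dot d xi ub = 0).
  { unfold xi. rewrite dot_scal_l, Hvu. ring. }
  destruct (Hal xi Hxi1 Hxi2) as [i0 [Hi0 [HS Hal0]]].
  unfold xi in Hal0. rewrite dot_scal_l in Hal0.
  assert (Hp0 : dot d v (z i0) <= - (alpha * r)).
  { apply (Rmult_le_compat_r r) in Hal0; [|lra].
    replace (- / r * dot d v (z i0) * r) with (- dot d v (z i0)) in Hal0 by (field; lra). lra. }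
  assert (Hs : forall j, dot d w (z j) = a * dot d ub (z j) + dot d v (z j)).
  { intros j. unfold v. rewrite dot_proj. fold a. ring. }
  assert (Hsum : sumR n (fun i => G L (dot d w (z i)) * dot d v (z i))
                 <= INR n * (exp (- (a * gamma)) / exp 1) + G L (dot d w (z i0)) * dot d v (z i0)).
  { apply (sumR_bound n (fun i => G L (dot d w (z i)) * dot d v (z i))); auto.
    - pose proof (exp_pos (- (a*gamma))). pose proof (exp_pos 1).
      left; apply Rdiv_lt_0_compat; auto.
    - intros k Hk. apply term_bound. apply Rmult_le_pos; lra.
      rewrite Hs. pose proof (Hmin k Hk). fold z in H. nra. }
  assert (Hfin : INR n * (exp (- (a * gamma)) / exp 1) + G L (dot d w (z i0)) * dot d v (z i0) <= 0).
  { assert (0 <= a * gamma) by (apply Rmult_le_pos; lra).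
    assert (Hs0 : dot d w (z i0) = a * gamma + dot d v (z i0)) by (rewrite Hs; unfold in_S in HS; fold z in HS; rewrite HS; ring).
    assert (0 < alpha * r) by (apply Rmult_lt_0_compat; lra).
    destruct L; unfold Kthr in HK.
    - apply (final_exp n _ (alpha * r)); auto.
      apply (Rmult_lt_compat_l alpha) in HK; auto. unfold Rdiv in HK.
      replace (alpha * ((1 + ln (INR n)) * / alpha)) with (1 + ln (INR n)) in HK by (field; lra). lra.
    - apply (final_log n _ (alpha * r)); auto.
      pose proof (exp_pos 1).
      apply (Rmult_lt_compat_l alpha) in HK; auto. unfold Rdiv in HK |- *.
      replace (alpha * (2 * INR n * / (exp 1 * alpha))) with (2 * INR n * / exp 1) in HK by (field; lra). lra. }
  assert (Heq : sumR n (fun i => dloss L (dot d w (z i)) * dot d v (z i))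
              = - sumR n (fun i => G L (dot d w (z i)) * dot d v (z i))).
  { replace (- sumR n (fun i => G L (dot d w (z i)) * dot d v (z i))) with
      ((-1) * sumR n (fun i => G L (dot d w (z i)) * dot d v (z i))) by ring.
    rewrite <- sumR_scal. apply sumR_ext; intros; unfold G; ring. }
  rewrite Heq. assert (0 < / INR n) by (apply Rinv_0_lt_compat; lra). nra.
Qed.
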